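(* Fix a time step $k$ and suppose the predicted density of the augmented set of trajectories is a Poisson multi-Bernoulli (PMB) density $\widetilde f_{k|k-1}(\widetilde{\mathbf{X}}_k)=\widetilde f^p_{k|k-1}(\widetilde{\mathbf{Y}}_k)\prod_{i=1}^{n_{k|k-1}}\widetilde f^i_{k|k-1}(\widetilde{\mathbf{X}}^i_k)$ with Poisson intensity $\lambda_{k|k-1}$ and Bernoulli components with existence probabilities $r^i_{k|k-1}$ and single-trajectory densities $f^i_{k|k-1}$. Let $\mathbf{z}_k=\{z_k^1,\dots,z_k^{m_k}\}$ and suppose each trajectory generates measurements according to the Poisson likelihood $\ell_k(\mathbf{w}_k|X)=e^{-\gamma_k(X)}\prod_{z\in\mathbf{w}_k}\gamma_k(X)\ell_k(z|X)$, with $\gamma_k(t,x^{1:\nu})=\gamma_k(x^\nu)\delta_k[t+\nu-1]$ and $\ell_k(z|t,x^{1:\nu})=\ell_k(z|x^\nu)\delta_k[t+\nu-1]$. Let $n_{k|k}=n_{k|k-1}+m_k$. Then the joint posterior of the augmented set of trajectories and the measurement-oriented association vector satisfies $$\widetilde f_{k|k}(\widetilde{\mathbf{X}}_k,\beta_k)\propto\widetilde f^p_{k|k}(\widetilde{\mathbf{Y}}_k)\prod_{i=1}^{n_{k|k-1}}\Big[\underline{f}^i_{k|k-1}(\widetilde{\mathbf{X}}^i_k)\prod_{j=1}^{m_k}\underline{s}_k(\widetilde{\mathbf{X}}^i_k,\beta^j_k;z^j_k)\Big]\times\prod_{i=n_{k|k-1}+1}^{n_{k|k}}\Big[\overline{f}^i_{k|k-1}(\widetilde{\mathbf{X}}^i_k)\,\overline{s}_k(\widetilde{\mathbf{X}}^i_k,\beta^{i-n_{k|k-1}}_k;z^{i-n_{k|k-1}}_k)\prod_{j=1}^{i-n_{k|k-1}-1}\underline{s}_k(\widetilde{\mathbf{X}}^i_k,\beta^j_k;z^j_k)\Big],$$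 where, writing $\widetilde{\mathbf{X}}$ for a set of augmented trajectories, $\underline{f}^i_{k|k-1}(\widetilde{\mathbf{X}})=r^i_{k|k-1}f^i_{k|k-1}(X)e^{-\gamma_k(X)}\delta_i[u]$ if $\widetilde{\mathbf{X}}=\{(u,X)\}$, $=1-r^i_{k|k-1}$ if $\widetilde{\mathbf{X}}=\emptyset$, and $0$ otherwise; $\overline{f}^i_{k|k-1}(\widetilde{\mathbf{X}})=\lambda_{k|k-1}(X)e^{-\gamma_k(X)}\delta_i[u]$ if $\widetilde{\mathbf{X}}=\{(u,X)\}$, $=1$ if $\widetilde{\mathbf{X}}=\emptyset$, and $0$ otherwise; $\underline{s}_k(\widetilde{\mathbf{X}}^i_k,\beta^j_k;z^j_k)=\frac{\ell_k(z^j_k|X)\gamma_k(X)}{\lambda^C_k(z^j_k)}\delta_i[u]$ if $\widetilde{\mathbf{X}}^i_k=\{(u,X)\}$ and $\beta^j_k=i$, $=1$ if $\beta^j_k\ne i$, and $0$ otherwise; $\overline{s}_k(\widetilde{\mathbf{X}}^i_k,\beta^j_k;z^j_k)=\frac{\ell_k(z^j_k|X)\gamma_k(X)}{\lambda^C_k(z^j_k)}\delta_i[u]$ if $\widetilde{\mathbf{X}}^i_k=\{(u,X)\}$ and $\beta^j_k=i$, $=1$ if $\widetilde{\mathbf{X}}^i_k=\emptyset$ and $\beta^j_k\ne i$, and $0$ otherwise; and $\widetilde f^p_{k|k}(\widetilde{\mathbf{Y}})=e^{-\langle\lambda_{k|k},1\rangle}\prod_{(u,X)\in\widetilde{\mathbf{Y}}}\delta_0[u]\lambda_{k|k}(X)$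 with $\lambda_{k|k}(X)=e^{-\gamma_k(X)}\lambda_{k|k-1}(X)$.
   Context: Single-object states lie in a locally compact, Hausdorff, second-countable space $\mathcal{X}$. A trajectory is $X=(t,x^{1:\nu})$ with start time $t$, length $\nu$ and states $x^{1:\nu}\in\mathcal{X}^\nu$, with $0\le t\le k$, $1\le\nu\le k-t+1$; $T_{(k)}$ denotes the space of such trajectories. $\delta_x[\cdot]$ is the Kronecker delta and $\langle f,g\rangle=\int fg$. Clutter measurements at time $k$ form a Poisson point process with intensity $\lambda^C_k$, independent of the objects, and measurements generated by different trajectories are independent. Auxiliary variables: a trajectory is augmented with $u\in\mathbb{U}=\{0,1,\dots,n\}$, giving augmented trajectories $(u,X)$; for a finite set $\widetilde{\mathbf{X}}_k$ of augmented trajectories, $\widetilde{\mathbf{Y}}_k=\{(u,X)\in\widetilde{\mathbf{X}}_k:u=0\}$ and $\widetilde{\mathbf{X}}^i_k=\{(u,X)\in\widetilde{\mathbf{X}}_k:u=i\}$. The augmented predicted PMB density has Poisson part $\widetilde f^p_{k|k-1}(\widetilde{\mathbf{Y}})=e^{-\langle\lambda_{k|k-1},1\rangle}\prod_{(u,X)\in\widetilde{\mathbf{Y}}}\delta_0[u]\lambda_{k|k-1}(X)$ (undetected trajectories) and Bernoulli parts $\widetilde f^i_{k|k-1}(\emptyset)=1-r^i_{k|k-1}$, $\widetilde f^i_{k|k-1}(\{(u,X)\})=r^i_{k|k-1}f^i_{k|k-1}(X)\delta_i[u]$, and $0$ on sets with two or more elements, $i\in\{1,\dots,n_{k|k-1}\}$.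 Bernoulli components of the posterior: components $i\in\{1,\dots,n_{k|k-1}\}$ correspond to the predicted Bernoulli components; component $i=n_{k|k-1}+j$, $j\in\{1,\dots,m_k\}$, represents a potential trajectory detected for the first time at time $k$ whose associated time-$k$ measurements are $z_k^j$ together with a (possibly empty) subset of $\{z_k^1,\dots,z_k^{j-1}\}$. The measurement-oriented association vector is $\beta_k=(\beta^1_k,\dots,\beta^{m_k}_k)$, where $\beta^j_k=i>0$ if and only if $z^j_k$ is associated with the $i$-th Bernoulli component and $\beta^j_k=0$ if $z^j_k$ is clutter; consequently $\beta^j_k\in\{0,1,\dots,n_{k|k-1},n_{k|k-1}+j,\dots,n_{k|k}\}$. $\widetilde f_{k|k}(\widetilde{\mathbf{X}}_k,\beta_k)$ denotes the joint Bayesian posterior (given measurements up to time $k$) of the augmented set of trajectories and $\beta_k$, with auxiliary space $\{0,\dots,n_{k|k}\}$. *)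

(* Defs.v *)
From mathcomp Require Import all_boot all_order all_algebra.
From mathcomp Require Import reals.
From mathcomp Require Import sequences.
From mathcomp.analysis Require Import exp.
Set Implicit Arguments. Unset Strict Implicit. Unset Printing Implicit Defensive.
Import Order.TTheory GRing.Theory Num.Theory.
Local Open Scope ring_scope.

(* Trajectories X = (t, x^{1:nu}) : start time t and nonempty state     *)
(* sequence x^1 :: x^{2:nu}; nu = 1 + size of the tail.                 *)
Record traj (Xs : Type) := Traj { tstart : nat; tfirst : Xs; trest : seq Xs }.

Definition tlen (Xs : Type) (X : traj Xs) : nat := (size (trest X)).+1.
Definition tlast (Xs : Type) (X : traj Xs) : Xs := last (tfirst X) (trest X).

Definition kdelta (R : realType) (a b : nat) : R := (a == b)%:R.

Section Model.
Variables (R : realType) (Xs Z : Type).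

Definition aug := (nat * traj Xs)%type.

Definition gammaT (k : nat) (gam : Xs -> R) (X : traj Xs) : R :=
  gam (tlast X) * kdelta R k (tstart X + tlen X - 1).
Definition likT (k : nat) (lik : Z -> Xs -> R) (zz : Z) (X : traj Xs) : R :=
  lik zz (tlast X) * kdelta R k (tstart X + tlen X - 1).

Definition trajlik (k : nat) (gam : Xs -> R) (lik : Z -> Xs -> R)
    (w : seq Z) (X : traj Xs) : R :=
  expR (- gammaT k gam X) * \prod_(zz <- w) (gammaT k gam X * likT k lik zz X).

(* Poisson (clutter) set density e^{-<lamC,1>} prod_{z in w} lamC(z);
   the integral <lamC,1> is supplied by an abstract functional intZ. *)
Definition clutter_dens (intZ : (Z -> R) -> R) (lamC : Z -> R) (w : seq Z) : R :=
  expR (- intZ lamC) * \prod_(zz <- w) lamC zz.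

Definition sublab (i : nat) (Xt : seq aug) : seq aug :=
  [seq a <- Xt | a.1 == i].

(* Poisson density of augmented undetected trajectories:
   e^{-<lam,1>} prod_{(u,X) in Y} delta_0[u] lam(X); the integral <lam,1>
   over the trajectory space is supplied by the abstract functional integ. *)
Definition poisson_aug (integ : (traj Xs -> R) -> R) (lam : traj Xs -> R)
    (Y : seq aug) : R :=
  expR (- integ lam) * \prod_(a <- Y) (kdelta R 0 a.1 * lam a.2).

Definition bern_pred (r : nat -> R) (f : nat -> traj Xs -> R) (i : nat)
    (Y : seq aug) : R :=
  match Y with
  | [::] => 1 - r i
  | [:: a] => r i * f i a.2 * kdelta R i a.1
  | _ => 0
  end.

Definition pmb_pred (integ : (traj Xs -> R) -> R) (lam : traj Xs -> R)
    (n : nat) (r : nat -> R) (f : nat -> traj Xs -> R) (Xt : seq aug) : R :=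
  (all (fun a => a.1 <= n)%N Xt)%:R
  * poisson_aug integ lam (sublab 0 Xt)
  * \prod_(1 <= i < n.+1) bern_pred r f i (sublab i Xt).

(* measurements z^1..z^m are given by z : nat -> Z (indices 1..m);
   beta : nat -> nat gives beta^j for j = 1..m.                          *)

Definition assoc_meas (m : nat) (z : nat -> Z) (beta : nat -> nat) (u : nat)
  : seq Z := [seq z j | j <- iota 1 m & beta j == u].

(* consistency between the posterior augmented set and beta:
   - each measurement with beta^j = i > 0 is generated by the (unique)
     trajectory with auxiliary variable i;
   - at most one trajectory per auxiliary value i > 0;
   - a trajectory with value n+j (first detected at time k) has z^j among
     its measurements (together with the range constraint on beta this
     means z^j is its highest-indexed measurement). *)
Definition assoc_ok (n m : nat) (beta : nat -> nat) (Xt : seq aug) : bool :=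
  [&& all (fun j => (beta j != 0%N) ==> has (fun a => a.1 == beta j) Xt) (iota 1 m),
      all (fun a => (a.1 != 0%N) ==> (count (fun b => b.1 == a.1) Xt <= 1)%N) Xt
    & all (fun a => (n < a.1)%N ==> (beta (a.1 - n)%N == a.1)) Xt].

(* label map from the posterior auxiliary space back to the predicted one:
   newly detected trajectories (u > n) were undetected (u = 0) before. *)
Definition relabel (n : nat) (a : aug) : aug :=
  (if (a.1 <= n)%N then a.1 else 0%N, a.2).

(* joint measurement likelihood of z_k and beta_k given the posterior
   augmented set: trajectory with value u > 0 generates the measurements
   {z^j : beta^j = u}, trajectories with u = 0 generate none, and
   {z^j : beta^j = 0} is clutter. *)
Definition joint_lik (k n m : nat) (gam : Xs -> R) (lik : Z -> Xs -> R)
    (intZ : (Z -> R) -> R) (lamC : Z -> R) (z : nat -> Z) (beta : nat -> nat)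
    (Xt : seq aug) : R :=
  (assoc_ok n m beta Xt)%:R
  * \prod_(a <- Xt) trajlik k gam lik
        (if a.1 == 0%N then [::] else assoc_meas m z beta a.1) a.2
  * clutter_dens intZ lamC (assoc_meas m z beta 0).

(* unnormalised Bayesian joint posterior (Bayes numerator):
   f~_{k|k}(X~_k, beta_k) is proportional to this. *)
Definition joint_post (k n m : nat) (integ : (traj Xs -> R) -> R)
    (lam : traj Xs -> R) (r : nat -> R) (f : nat -> traj Xs -> R)
    (gam : Xs -> R) (lik : Z -> Xs -> R) (intZ : (Z -> R) -> R)
    (lamC : Z -> R) (z : nat -> Z) (beta : nat -> nat) (Xt : seq aug) : R :=
  pmb_pred integ lam n r f (map (relabel n) Xt)
  * joint_lik k n m gam lik intZ lamC z beta Xt.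

Definition fund (k : nat) (gam : Xs -> R) (r : nat -> R)
    (f : nat -> traj Xs -> R) (i : nat) (Y : seq aug) : R :=
  match Y with
  | [::] => 1 - r i
  | [:: a] => r i * f i a.2 * expR (- gammaT k gam a.2) * kdelta R i a.1
  | _ => 0
  end.

Definition fover (k : nat) (gam : Xs -> R) (lam : traj Xs -> R)
    (i : nat) (Y : seq aug) : R :=
  match Y with
  | [::] => 1
  | [:: a] => lam a.2 * expR (- gammaT k gam a.2) * kdelta R i a.1
  | _ => 0
  end.

Definition sund (k : nat) (gam : Xs -> R) (lik : Z -> Xs -> R)
    (lamC : Z -> R) (i : nat) (Y : seq aug) (bj : nat) (zj : Z) : R :=
  if bj == i then
    match Y with
    | [:: a] => likT k lik zj a.2 * gammaT k gam a.2 / lamC zj * kdelta R i a.1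
    | _ => 0
    end
  else 1.

Definition sover (k : nat) (gam : Xs -> R) (lik : Z -> Xs -> R)
    (lamC : Z -> R) (i : nat) (Y : seq aug) (bj : nat) (zj : Z) : R :=
  if bj == i then
    match Y with
    | [:: a] => likT k lik zj a.2 * gammaT k gam a.2 / lamC zj * kdelta R i a.1
    | _ => 0
    end
  else
    match Y with
    | [::] => 1
    | _ => 0
    end.

Definition lam_upd (k : nat) (gam : Xs -> R) (lam : traj Xs -> R)
    (X : traj Xs) : R := expR (- gammaT k gam X) * lam X.

Definition prop3_rhs (k n m : nat) (integ : (traj Xs -> R) -> R)
    (lam : traj Xs -> R) (r : nat -> R) (f : nat -> traj Xs -> R)
    (gam : Xs -> R) (lik : Z -> Xs -> R) (lamC : Z -> R)
    (z : nat -> Z) (beta : nat -> nat) (Xt : seq aug) : R :=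
  poisson_aug integ (lam_upd k gam lam) (sublab 0 Xt)
  * \prod_(1 <= i < n.+1)
      (fund k gam r f i (sublab i Xt)
       * \prod_(1 <= j < m.+1) sund k gam lik lamC i (sublab i Xt) (beta j) (z j))
  * \prod_(n.+1 <= i < (n + m).+1)
      (fover k gam lam i (sublab i Xt)
       * sover k gam lik lamC i (sublab i Xt) (beta (i - n)%N) (z (i - n)%N)
       * \prod_(1 <= j < (i - n)%N) sund k gam lik lamC i (sublab i Xt) (beta j) (z j)).

End Model.

(* Main.v *)
Require Import Defs.
From mathcomp Require Import all_boot all_order all_algebra.
From mathcomp Require Import reals.
From mathcomp Require Import sequences.
From mathcomp.analysis Require Import exp.
From mathcomp Require Import ring zify.
Import Order.TTheory GRing.Theory Num.Theory.
Local Open Scope ring_scope.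


Lemma prod_nat0 (R : comNzRingType) a b i (F : nat -> R) :
  (a <= i < b)%N -> F i = 0 -> \prod_(a <= j < b) F j = 0.
Proof.
move=> hi Fi; rewrite (bigD1_seq i) ?mem_index_iota ?iota_uniq //.
by rewrite Fi /= mul0r.
Qed.

Lemma prod_pick (R : comNzRingType) N x (g : R) : (x <= N)%N ->
  \prod_(0 <= i < N.+1) (if x == i then g else 1) = g.
Proof.
move=> hx; rewrite (bigD1_seq x) ?mem_index_iota ?iota_uniq //= ?ltnS //.
rewrite eqxx big1 ?mulr1 // => i hi; by rewrite eq_sym (negbTE hi).
Qed.

Lemma prod_label (R : comNzRingType) (T : Type) (s : seq (nat * T)) N
  (H : nat * T -> R) : all (fun a => a.1 <= N)%N s ->
  \prod_(a <- s) H a = \prod_(0 <= i < N.+1) \prod_(a <- [seq b <- s | b.1 == i]) H a.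
Proof.
elim: s => [|a s IH] /=; first by rewrite big_nil big1.
move=> /andP[ha hs]; rewrite big_cons IH //.
transitivity (\prod_(0 <= i < N.+1) ((if a.1 == i then H a else 1) *
   \prod_(b <- [seq b <- s | b.1 == i]) H b)).
  by rewrite big_split /= prod_pick.
by apply: eq_bigr => i _ /=; case: ifP => _; rewrite ?big_cons ?mul1r.
Qed.

Lemma prod_jlabel (R : comNzRingType) m N (beta : nat -> nat) (G : nat -> R) :
  (forall j, (1 <= j <= m)%N -> (beta j <= N)%N) ->
  \prod_(1 <= j < m.+1) G j =
  \prod_(0 <= i < N.+1) \prod_(1 <= j < m.+1 | beta j == i) G j.
Proof.
move=> hb.
rewrite [RHS](eq_bigr (fun i => \prod_(1 <= j < m.+1) (if beta j == i then G j else 1)));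
  last by move=> i _; rewrite big_mkcond.
rewrite exchange_big /=; rewrite big_seq [RHS]big_seq; apply: eq_bigr => j.
by rewrite mem_index_iota ltnS => hj; rewrite prod_pick // hb.
Qed.

Lemma prod_cancel (R : fieldType) (I : eqType) (s : seq I) (P : pred I)
  (a b : I -> R) : (forall j, j \in s -> P j -> a j != 0) ->
  \prod_(j <- s | P j) a j * \prod_(j <- s | P j) (b j / a j) = \prod_(j <- s | P j) b j.
Proof.
move=> ha; rewrite -big_split /= big_seq_cond [RHS]big_seq_cond.
apply: eq_bigr => j /andP[js Pj]; by rewrite mulrC divfK // ha.
Qed.



Lemma sublab_relabel (Xs : Type) n i (s : seq (aug Xs)) : (0 < i <= n)%N ->
  sublab i (map (relabel n) s) = sublab i s.
Proof.
move=> /andP[i0 hi]; rewrite /sublab; elim: s => [|[u X] s IH] //=.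
rewrite IH /relabel /=; case: (leqP u n) => hu //.
have -> : (0 == i) = false by apply/negbTE; rewrite eq_sym -lt0n.
have -> : (u == i) = false by apply/negbTE; rewrite neq_ltn (leq_ltn_trans hi hu) orbT.
by [].
Qed.

Lemma iota1 m : index_iota 1 m.+1 = iota 1 m.
Proof. by rewrite /index_iota subn1. Qed.

Lemma trajlik_lab (R : realType) (Xs Z : Type) k (gam : Xs -> R) (lik : Z -> Xs -> R) m (z : nat -> Z) beta i X :
  trajlik k gam lik (assoc_meas m z beta i) X =
  expR (- gammaT k gam X) *
  \prod_(1 <= j < m.+1 | beta j == i) (gammaT k gam X * likT k lik (z j) X).
Proof.
by rewrite /trajlik /assoc_meas big_map big_filter iota1.
Qed.

Lemma clutter_lab (R : realType) (Z : Type) intZ (lamC : Z -> R) m z beta :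
  clutter_dens intZ lamC (assoc_meas m z beta 0) =
  expR (- intZ lamC) * \prod_(1 <= j < m.+1 | beta j == 0%N) lamC (z j).
Proof.
by rewrite /clutter_dens /assoc_meas big_map big_filter iota1.
Qed.

Lemma sund_lab (R : realType) (Xs Z : Type) k (gam : Xs -> R) lik lamC
   (z : nat -> Z) beta i (a : aug Xs) b : a.1 = i ->
  \prod_(1 <= j < b) sund k gam lik lamC i [:: a] (beta j) (z j) =
  \prod_(1 <= j < b | beta j == i)
     (gammaT k gam a.2 * likT k lik (z j) a.2 / lamC (z j)).
Proof.
move=> ha; rewrite [RHS]big_mkcond; apply: eq_bigr => j _.
rewrite /sund; case: eqP => // _.
by rewrite /kdelta ha eqxx mulr1 (mulrC (likT _ _ _ _)).
Qed.

Lemma split_j0 (R : comNzRingType) m j0 i (beta : nat -> nat) (h : nat -> R) :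
  (1 <= j0 <= m)%N -> (forall j, (j0 < j <= m)%N -> beta j != i) -> beta j0 = i ->
  \prod_(1 <= j < m.+1 | beta j == i) h j =
  \prod_(1 <= j < j0 | beta j == i) h j * h j0.
Proof.
move=> /andP[h1 h2] hj hb.
rewrite (@big_cat_nat _ _ _ j0) //; last by rewrite ltnW.
rewrite (@big_ltn_cond _ _ _ j0) ?ltnS // hb eqxx /=.
have -> : \prod_(j0.+1 <= j < m.+1 | beta j == i) h j = 1.
  rewrite big_nat_cond big1 //.
  move=> j /andP[/andP[ja jb] /eqP hj']; move: (hj j); rewrite ja -ltnS jb hj' eqxx.
  by move=> /(_ isT).
by rewrite mulr1.
Qed.



Lemma kdd (R : realType) i : kdelta R i i = 1.
Proof. by rewrite /kdelta eqxx. Qed.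

Lemma piece_low (R : realType) (Xs Z : Type) k n m (r : nat -> R) f
  (gam : Xs -> R) (lik : Z -> Xs -> R) (lamC : Z -> R) (z : nat -> Z)
  (lam : traj Xs -> R) beta i (S : seq (aug Xs)) :
  (0 < i <= n)%N ->
  (forall j, (1 <= j <= m)%N -> lamC (z j) != 0) ->
  (S = [::] /\ (forall j, (1 <= j <= m)%N -> beta j != i)) \/
    (exists a, S = [:: a] /\ a.1 = i) ->
  \prod_(a <- S) (if (a.1 == 0%N) || (n < a.1)%N then lam a.2 else 1)
  * bern_pred r f i S
  * \prod_(a <- S) trajlik k gam lik
        (if a.1 == 0%N then [::] else assoc_meas m z beta a.1) a.2
  = \prod_(1 <= j < m.+1 | beta j == i) lamC (z j)
    * (fund k gam r f i S
       * \prod_(1 <= j < m.+1) sund k gam lik lamC i S (beta j) (z j)).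
Proof.
move=> /andP[i0 iN] hC [[-> hb]|[a [-> ha]]].
  rewrite !big_nil /=.
  rewrite big_nat_cond big1; last first.
    by move=> j /andP[/andP[j1 j2] /eqP hj]; move: (hb j); rewrite j1 -ltnS j2 hj eqxx => /(_ isT).
  rewrite big_nat_cond big1 ?mul1r ?mulr1 //.
  move=> j /andP[/andP[j1 j2] _]; rewrite /sund.
  by move: (hb j); rewrite j1 -ltnS j2 => /(_ isT) /negbTE ->.
rewrite !big_seq1 sund_lab // ha.
have -> : ((i == 0%N) || (n < i)%N) = false.
  by rewrite eqn0Ngt i0 /= ltnNge iN.
rewrite (negbTE (lt0n_neq0 i0)) trajlik_lab /= ha !kdd.
rewrite -(@prod_cancel _ _ (index_iota 1 m.+1) (fun j => beta j == i)
  (fun j => lamC (z j)) (fun j => gammaT k gam a.2 * likT k lik (z j) a.2)).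
  ring.
by move=> j; rewrite mem_index_iota ltnS => hj _; apply: hC.
Qed.

Lemma piece_high (R : realType) (Xs Z : Type) k n m
  (gam : Xs -> R) (lik : Z -> Xs -> R) (lamC : Z -> R) (z : nat -> Z)
  (lam : traj Xs -> R) beta i (S : seq (aug Xs)) :
  (n < i <= n + m)%N ->
  (forall j, (1 <= j <= m)%N -> lamC (z j) != 0) ->
  (forall j, (1 <= j <= m)%N -> (beta j <= n)%N \/ (n + j <= beta j <= n + m)%N) ->
  (S = [::] /\ (forall j, (1 <= j <= m)%N -> beta j != i)) \/
    (exists a, S = [:: a] /\ a.1 = i /\ beta (i - n)%N = i) ->
  \prod_(a <- S) (if (a.1 == 0%N) || (n < a.1)%N then lam a.2 else 1)
  * \prod_(a <- S) trajlik k gam lik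
        (if a.1 == 0%N then [::] else assoc_meas m z beta a.1) a.2
  = \prod_(1 <= j < m.+1 | beta j == i) lamC (z j)
    * (fover k gam lam i S
       * sover k gam lik lamC i S (beta (i - n)%N) (z (i - n)%N)
       * \prod_(1 <= j < (i - n)%N) sund k gam lik lamC i S (beta j) (z j)).
Proof.
move=> /andP[ni iN] hC hB.
have j0r : (1 <= i - n <= m)%N.
  by rewrite subn_gt0 ni /= leq_subLR.
case=> [[-> hb]|[a [-> [ha hb0]]]].
  rewrite !big_nil /=.
  rewrite big_nat_cond big1; last first.
    by move=> j /andP[/andP[j1 j2] /eqP hj]; move: (hb j); rewrite j1 -ltnS j2 hj eqxx => /(_ isT).
  rewrite /sover (negbTE (hb _ j0r)).
  rewrite big_nat_cond big1 ?mul1r ?mulr1 //.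
  move=> j /andP[/andP[j1 j2] _]; rewrite /sund.
  have jm : (1 <= j <= m)%N.
    by rewrite j1 /=; apply: leq_trans (ltnW j2) _; case/andP: j0r.
  by rewrite (negbTE (hb j jm)).
rewrite !big_seq1 sund_lab // ha.
have -> : ((i == 0%N) || (n < i)%N) = true by rewrite ni orbT.
have i0 : (i != 0%N) by rewrite -lt0n; apply: leq_ltn_trans ni.
rewrite (negbTE i0) trajlik_lab /=.
have hsplit : forall h : nat -> R, \prod_(1 <= j < m.+1 | beta j == i) h j =
  \prod_(1 <= j < (i - n)%N | beta j == i) h j * h (i - n)%N.
  move=> h; apply: split_j0 => // j /andP[j1 j2].
  have jm : (1 <= j <= m)%N by apply/andP; split; lia.
  case: (hB j jm) => [hb|/andP[h1 _]]; rewrite neq_ltn; apply/orP.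
    by left; lia.
  by right; lia.
rewrite /sover hb0 eqxx /= ha !kdd !hsplit.
rewrite -(@prod_cancel _ _ (index_iota 1 (i - n)) (fun j => beta j == i)
  (fun j => lamC (z j)) (fun j => gammaT k gam a.2 * likT k lik (z j) a.2)).
  field; exact: hC.
move=> j; rewrite mem_index_iota => hj _; apply: hC; lia.
Qed.



Lemma split3 (R : comNzRingType) n m (G : nat -> R) :
  \prod_(0 <= i < (n + m).+1) G i =
  G 0%N * (\prod_(1 <= i < n.+1) G i * \prod_(n.+1 <= i < (n + m).+1) G i).
Proof.
rewrite big_ltn // (@big_cat_nat _ _ _ n.+1) //; lia.
Qed.

Lemma allPn' (T : Type) (p : pred T) s : ~~ all p s ->
  exists s1 a s2, s = s1 ++ a :: s2 /\ ~~ p a.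
Proof.
elim: s => [|x s IH] //=.
case px: (p x) => /= h.
  by have [s1 [a [s2 [-> pa]]]] := IH h; exists (x :: s1), a, s2.
by exists [::], x, s; rewrite px.
Qed.

Lemma sublab_ne (Xs : Type) s1 (a : aug Xs) s2 :
  (0 < size (sublab a.1 (s1 ++ a :: s2)))%N.
Proof. by rewrite /sublab filter_cat /= eqxx size_cat /= addnS. Qed.

Lemma all_split (T : Type) (p : pred T) s1 a s2 : all p (s1 ++ a :: s2) -> p a.
Proof. by rewrite all_cat /= => /andP[_ /andP[]]. Qed.

Lemma rhs_zero (R : realType) (Xs Z : Type) (k n m : nat)
    (integ : (traj Xs -> R) -> R)
    (lam : traj Xs -> R) (r : nat -> R) (f : nat -> traj Xs -> R)
    (gam : Xs -> R) (lik : Z -> Xs -> R) (lamC : Z -> R) (z : nat -> Z)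
    (Xt : seq (aug Xs)) (beta : nat -> nat) :
      all (fun a => a.1 <= n + m)%N Xt ->
      (forall j, (1 <= j <= m)%N ->
         (beta j <= n)%N \/ (n + j <= beta j <= n + m)%N) ->
  ~~ assoc_ok n m beta Xt ->
  prop3_rhs k n m integ lam r f gam lik lamC z beta Xt = 0.
Proof.
move=> Hall Hb; rewrite /assoc_ok !negb_and => /orP[|/orP[]].
- case/allPn => j; rewrite mem_iota add1n ltnS => hj; rewrite negb_imply.
  case/andP=> b0; rewrite has_count -size_filter lt0n negbK => /eqP /size0nil hS.
  case: (Hb j hj) => hb.
    rewrite /prop3_rhs; apply/eqP; rewrite 2!mulf_eq0; apply/orP; left.
    apply/orP; right; apply/eqP; apply: (@prod_nat0 _ _ _ (beta j)).
      by rewrite ltnS hb andbT lt0n.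
    rewrite /sublab hS; apply/eqP; rewrite mulf_eq0; apply/orP; right; apply/eqP.
    apply: (@prod_nat0 _ _ _ j); first by rewrite ltnS.
    by rewrite /sund eqxx.
  rewrite /prop3_rhs; apply/eqP; rewrite mulf_eq0; apply/orP; right.
  apply/eqP; apply: (@prod_nat0 _ _ _ (beta j)); first by lia.
  rewrite /sublab hS.
  case: (eqVneq (beta j - n)%N j) => e.
    by rewrite e /sover eqxx mulr0 mul0r.
  apply/eqP; rewrite mulf_eq0; apply/orP; right; apply/eqP.
  apply: (@prod_nat0 _ _ _ j); first by lia.
  by rewrite /sund eqxx.
- move=> /allPn' [s1 [a [s2 [Es]]]]; rewrite negb_imply => /andP[a0 hc].
  have ha : (a.1 <= n + m)%N by apply: (@all_split _ (fun a => a.1 <= n + m)%N s1 a s2); rewrite -Es.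
  have hsz : (1 < size (sublab a.1 Xt))%N by rewrite /sublab size_filter ltnNge.
  case: (leqP a.1 n) => han.
    rewrite /prop3_rhs; apply/eqP; rewrite 2!mulf_eq0; apply/orP; left.
    apply/orP; right; apply/eqP; apply: (@prod_nat0 _ _ _ a.1).
      by rewrite ltnS han andbT lt0n.
    by move: hsz; case: (sublab a.1 Xt) => [|x [|y t]] //= _; rewrite mul0r.
  rewrite /prop3_rhs; apply/eqP; rewrite mulf_eq0; apply/orP; right.
  apply/eqP; apply: (@prod_nat0 _ _ _ a.1); first by lia.
  by move: hsz; case: (sublab a.1 Xt) => [|x [|y t]] //= _; rewrite !mul0r.
- move=> /allPn' [s1 [a [s2 [Es]]]]; rewrite negb_imply => /andP[na hne].
  have ha : (a.1 <= n + m)%N by apply: (@all_split _ (fun a => a.1 <= n + m)%N s1 a s2); rewrite -Es.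
  have hsz : (0 < size (sublab a.1 Xt))%N by rewrite Es sublab_ne.
  rewrite /prop3_rhs; apply/eqP; rewrite mulf_eq0; apply/orP; right.
  apply/eqP; apply: (@prod_nat0 _ _ _ a.1); first by lia.
  move: hsz; case: (sublab a.1 Xt) => [|x t] // _.
  by rewrite /sover (negbTE hne) mulr0 mul0r.
Qed.



Lemma all_sublab (Xs : Type) (p : pred (aug Xs)) i (s : seq (aug Xs)) : all p s -> all p (sublab i s).
Proof. by elim: s => //= a s IH /andP[pa /IH]; rewrite /sublab /=; case: ifP => //= _ ->; rewrite pa. Qed.

Lemma sublab_all (Xs : Type) i (s : seq (aug Xs)) : all (fun a => a.1 == i) (sublab i s).
Proof. by elim: s => //= a s IH; rewrite /sublab /=; case: ifP => //= ->. Qed.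

Lemma eq_big_lab (R : comNzRingType) (Xs : Type) (s : seq (aug Xs)) i (F G : aug Xs -> R) :
  (forall a : aug Xs, a.1 = i -> F a = G a) ->
  \prod_(a <- [seq b <- s | b.1 == i]) F a = \prod_(a <- [seq b <- s | b.1 == i]) G a.
Proof. by move=> h; rewrite !big_filter; apply: eq_bigr => a /eqP; apply: h. Qed.

Theorem proposition3 (R : realType) (Xs Z : Type) (k n m : nat)
    (integ : (traj Xs -> R) -> R) (intZ : (Z -> R) -> R)
    (lam : traj Xs -> R) (r : nat -> R) (f : nat -> traj Xs -> R)
    (gam : Xs -> R) (lik : Z -> Xs -> R) (lamC : Z -> R) (z : nat -> Z)
    (hC : forall j, (1 <= j <= m)%N -> 0 < lamC (z j)) :
  exists2 c : R, 0 < c &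
    forall (Xt : seq (aug Xs)) (beta : nat -> nat),
      all (fun a => a.1 <= n + m)%N Xt ->
      (forall j, (1 <= j <= m)%N ->
         (beta j <= n)%N \/ (n + j <= beta j <= n + m)%N) ->
      joint_post k n m integ lam r f gam lik intZ lamC z beta Xt
      = c * prop3_rhs k n m integ lam r f gam lik lamC z beta Xt.
Proof.
pose E2 := expR (- integ (lam_upd k gam lam)).
exists (expR (- integ lam) * expR (- intZ lamC) * \prod_(1 <= j < m.+1) lamC (z j) / E2).
  rewrite divr_gt0 ?expR_gt0 // !mulr_gt0 ?expR_gt0 //.
  by rewrite big_seq; apply: prodr_gt0 => j; rewrite mem_index_iota ltnS => hj; exact: hC.
move=> Xt beta Hall Hb.
have hC' : forall j, (1 <= j <= m)%N -> lamC (z j) != 0.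
  by move=> j hj; apply: lt0r_neq0; exact: hC.
rewrite /joint_post /joint_lik.
case: (boolP (assoc_ok n m beta Xt)) => Hok; last first.
  rewrite (@rhs_zero R Xs Z k n m integ lam r f gam lik lamC z Xt beta Hall Hb Hok) mulr0 mulr0n !mul0r mulr0.
  done.
rewrite mulr1n mul1r.
case/and3P: Hok => hA hB hC3.
have Hs0 : forall i, i != 0%N ->
    sublab i Xt = [::] \/ exists a, sublab i Xt = [:: a] /\ a.1 = i.
  move=> i i0; have := @sublab_all _ i Xt; have := @all_sublab _ _ i _ hB.
  rewrite /sublab; case E: [seq a <- Xt | a.1 == i] => [|a [|b t]].
  - by left.
  - by move=> _ /= /andP[/eqP ha _]; right; exists a.
  - move=> /= /andP[+ _] /andP[/eqP ha _]; rewrite ha i0 /= -size_filter.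
    by rewrite E.
have Hemp : forall j, (1 <= j <= m)%N -> beta j != 0%N -> sublab (beta j) Xt <> [::].
  move=> j hj b0; have := (allP hA) j; rewrite mem_iota add1n ltnS hj b0.
  move=> /(_ isT) /=; rewrite has_count -size_filter.
  by rewrite /sublab; case: [seq a <- Xt | a.1 == beta j].
have Hnew : forall i, (n < i)%N -> sublab i Xt <> [::] -> beta (i - n)%N = i.
  move=> i ni; have := @sublab_all _ i Xt; have := @all_sublab _ _ i _ hC3.
  rewrite /sublab; case: [seq a <- Xt | a.1 == i] => [|a t] //=.
  by move=> /andP[+ _] /andP[/eqP ha _]; rewrite ha ni => /= /eqP.
have eP : pmb_pred integ lam n r f (map (relabel n) Xt) =
   expR (- integ lam) * \prod_(a <- Xt) (if (a.1 == 0%N) || (n < a.1)%N then lam a.2 else 1)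
   * \prod_(1 <= i < n.+1) bern_pred r f i (sublab i Xt).
  rewrite /pmb_pred.
  have -> : all (fun a => a.1 <= n)%N (map (relabel n) Xt).
    rewrite all_map (@eq_all _ _ predT) ?all_predT // => a /=; rewrite /relabel /=; case: ifP => //.
  rewrite (_ : true%:R = 1) // mul1r /poisson_aug; congr (_ * _ * _).
    rewrite /sublab filter_map big_map big_filter big_mkcond; apply: eq_bigr => [[u X]] _.
    rewrite /relabel /=; case: (leqP u n) => hu /=.
      case: eqP => [->|_] /=; first by rewrite /kdelta eqxx mul1r.
      by [].
    by rewrite /kdelta eqxx mul1r orbT.
  by apply: eq_big_nat => i hi; rewrite sublab_relabel.
rewrite eP clutter_lab.
rewrite (@prod_label _ _ Xt (n+m) (fun a => if (a.1 == 0%N) || (n < a.1)%N then lam a.2 else 1) Hall).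
rewrite (@prod_label _ _ Xt (n+m) (fun a => trajlik k gam lik (if a.1 == 0%N then [::] else assoc_meas m z beta a.1) a.2) Hall).
rewrite (@prod_jlabel _ m (n+m) beta (fun j => lamC (z j))); last first.
  by move=> j hj; case: (Hb j hj); lia.
rewrite !split3 /prop3_rhs /poisson_aug /sublab -/E2.
set A0 := (\prod_(a <- [seq b <- Xt | b.1 == 0%N]) _).
set T0 := (\prod_(a <- [seq b <- Xt | b.1 == 0%N]) _).
set Q0 := (\prod_(a <- [seq b <- Xt | b.1 == 0%N]) _).
set A1 := (\prod_(1 <= i < n.+1) _).
set B1 := (\prod_(1 <= i < n.+1) _).
set T1 := (\prod_(1 <= i < n.+1) _).
set L1 := (\prod_(1 <= i < n.+1) _).
set RS1 := (\prod_(1 <= i < n.+1) _).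
set A2 := (\prod_(n.+1 <= i < (n + m).+1) _).
set T2 := (\prod_(n.+1 <= i < (n + m).+1) _).
set L2 := (\prod_(n.+1 <= i < (n + m).+1) _).
set RS2 := (\prod_(n.+1 <= i < (n + m).+1) _).
set L0 := (\prod_(1 <= j < m.+1 | beta j == 0%N) _).
have hE2 : E2 != 0 by apply: lt0r_neq0; apply: expR_gt0.
have f0 : A0 * T0 = Q0.
  rewrite /A0 /T0 /Q0 -big_split /=; apply: eq_big_lab => a ha.
  by rewrite ha /= /trajlik big_nil kdd /lam_upd; ring.
have f1 : A1 * B1 * T1 = L1 * RS1.
  rewrite /A1 /B1 /T1 /L1 /RS1 -!big_split /=; apply: eq_big_nat => i /andP[i1 i2].
  apply: piece_low => //; first by rewrite i1 -ltnS.
  have i0 : i != 0%N by rewrite -lt0n.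
  case: (Hs0 i i0) => [hS|[a [hS ha]]].
    left; split; first exact: hS.
    move=> j hj; apply/eqP => hbj; apply: (Hemp j hj); first by rewrite hbj.
    by rewrite hbj.
  by right; exists a.
have f2 : A2 * T2 = L2 * RS2.
  rewrite /A2 /T2 /L2 /RS2 -!big_split /=; apply: eq_big_nat => i /andP[i1 i2].
  apply: piece_high => //; first by rewrite i1 -ltnS.
  have i0 : i != 0%N by rewrite -lt0n; apply: leq_trans i1.
  case: (Hs0 i i0) => [hS|[a [hS ha]]].
    left; split; first exact: hS.
    move=> j hj; apply/eqP => hbj; apply: (Hemp j hj); first by rewrite hbj.
    by rewrite hbj.
  right; exists a; split => //; split => //.
  by apply: Hnew => //; rewrite hS.
transitivity (expR (- integ lam) * expR (- intZ lamC) * L0 * (A0 * T0) * (A1 * B1 * T1) * (A2 * T2)).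
  ring.
rewrite f0 f1 f2; field; exact: hE2.
Qed.
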